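(* Let $\Gamma$ be a countably infinite group with a strictly decreasing sequence $\{\Gamma_n\}$ of finite-index normal subgroups with trivial intersection, $X=\varprojlim\Gamma/\Gamma_n$ with left translation action and quotient maps $\pi_n:X\to\Gamma/\Gamma_n$, and for $n\ge2$ let $\gamma_n\in\Gamma_{n-1}\setminus\Gamma_n$ and $C_n=\pi_n^{-1}(\gamma_n\Gamma_n)$. Let $s_1,s_2\in\Gamma$ and $x,y\in X$ with $s_1x\in C_{n_1}$, $s_2x\in C_{n_2}$ where $n_1<n_2$, and $s_1y\notin C_{n_1}$, $s_2y\in C_{m_2}$. Then $m_2\le n_1$.
   Context: $X=\varprojlim\Gamma/\Gamma_n$ is the compact group of compatible sequences in $\prod_n\Gamma/\Gamma_n$ containing $\Gamma$ as a subgroup; $\Gamma$ acts by left translation. All indices $n_1,n_2,m_2$ are $\ge2$. *)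

(* Defs.v *)
From Stdlib Require Import Arith List.

Record group := Group {
  gcar :> Type;
  gmul : gcar -> gcar -> gcar;
  gone : gcar;
  ginv : gcar -> gcar;
  gmulA : forall a b c, gmul a (gmul b c) = gmul (gmul a b) c;
  gmul1l : forall a, gmul gone a = a;
  gmulVl : forall a, gmul (ginv a) a = gone
}.

Arguments gmul {g}.
Arguments gone {g}.
Arguments ginv {g}.

Definition countably_infinite (G : group) : Prop :=
  exists f : nat -> G,
    (forall m n, f m = f n -> m = n) /\ (forall g, exists n, f n = g).

Definition is_subgroup {G : group} (H : G -> Prop) : Prop :=
  H gone /\ (forall a b, H a -> H b -> H (gmul a b)) /\ (forall a, H a -> H (ginv a)).

Definition is_normal {G : group} (H : G -> Prop) : Prop :=
  forall g h, H h -> H (gmul (gmul g h) (ginv g)).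

Definition finite_index {G : group} (H : G -> Prop) : Prop :=
  exists reps : list G, forall g, exists r, In r reps /\ H (gmul (ginv r) g).

Definition strict_subset {G : group} (K H : G -> Prop) : Prop :=
  (forall g, K g -> H g) /\ (exists g, H g /\ ~ K g).

Definition lcoset {G : group} (H : G -> Prop) (g : G) : G -> Prop :=
  fun h => H (gmul (ginv g) h).

(* X = inverse limit of G / Gam n (n >= 1): compatible sequences of cosets;
   the component at index 0 is irrelevant (the sequence is indexed from 1). *)
Definition inv_limit {G : group} (Gam : nat -> G -> Prop) : Type :=
  { c : nat -> G -> Prop |
      forall n, 1 <= n ->
        (exists g, c n = lcoset (Gam n) g) /\ (forall h, c (S n) h -> c n h) }.

Definition translate {G : group} (s : G) (c : nat -> G -> Prop) : nat -> G -> Prop :=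
  fun n h => c n (gmul (ginv s) h).

Definition in_C {G : group} (Gam : nat -> G -> Prop) (gam : nat -> G) (n : nat)
  (c : nat -> G -> Prop) : Prop :=
  c n = lcoset (Gam n) (gam n).

(* Main.v *)
Require Import Defs.
From Stdlib Require Import Arith Lia FunctionalExtensionality PropExtensionality.

Section GL.
Variable G : group.
Lemma gcancel (a b c : G) : gmul a b = gmul a c -> b = c.
Proof. intro H. rewrite <- (gmul1l _ b), <- (gmul1l _ c), <- (gmulVl _ a), <- !gmulA, H. reflexivity. Qed.
Lemma gmul1r (a : G) : gmul a gone = a.
Proof. apply (gcancel (ginv a)). rewrite gmulA, gmulVl, gmul1l. reflexivity. Qed.
Lemma gmulVr (a : G) : gmul a (ginv a) = gone.
Proof. apply (gcancel (ginv a)). rewrite gmulA, gmulVl, gmul1l, gmul1r. reflexivity. Qed.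
Lemma ginv_uniq (u v : G) : gmul u v = gone -> ginv u = v.
Proof. intro H. rewrite <- (gmul1r (ginv u)), <- H, gmulA, gmulVl, gmul1l. reflexivity. Qed.
Lemma ginvM (a b : G) : ginv (gmul (ginv a) b) = gmul (ginv b) a.
Proof. apply ginv_uniq. rewrite <- gmulA, (gmulA _ b), gmulVr, gmul1l, gmulVl. reflexivity. Qed.
End GL.

Lemma coset_eq (G : group) (H : G -> Prop) (a b : G) : is_subgroup H ->
  H (gmul (ginv a) b) -> lcoset H a = lcoset H b.
Proof.
  intros [H1 [HM HI]] Hab. apply functional_extensionality; intro h.
  apply propositional_extensionality; unfold lcoset; split; intro Hh.
  - replace (gmul (ginv b) h) with (gmul (ginv (gmul (ginv a) b)) (gmul (ginv a) h)).
    + apply HM; auto.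
    + rewrite ginvM, <- gmulA, (gmulA _ a), gmulVr, gmul1l. reflexivity.
  - replace (gmul (ginv a) h) with (gmul (gmul (ginv a) b) (gmul (ginv b) h)).
    + apply HM; auto.
    + rewrite <- gmulA, (gmulA _ b), gmulVr, gmul1l. reflexivity.
Qed.

Theorem lemma4p5 (G : group) (Gam : nat -> G -> Prop) (gam : nat -> G)
  (Hcount : countably_infinite G)
  (Hsub : forall n, 1 <= n -> is_subgroup (Gam n))
  (Hnorm : forall n, 1 <= n -> is_normal (Gam n))
  (Hfin : forall n, 1 <= n -> finite_index (Gam n))
  (Hdec : forall n, 1 <= n -> strict_subset (Gam (S n)) (Gam n))
  (Htriv : forall g, (forall n, 1 <= n -> Gam n g) -> g = gone)
  (Hgam : forall n, 2 <= n -> Gam (n - 1) (gam n) /\ ~ Gam n (gam n))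
  (s1 s2 : G) (x y : inv_limit Gam) (n1 n2 m2 : nat)
  (Hn1 : 2 <= n1) (Hn2 : 2 <= n2) (Hm2 : 2 <= m2) (Hlt : n1 < n2)
  (Hx1 : in_C Gam gam n1 (translate s1 (proj1_sig x)))
  (Hx2 : in_C Gam gam n2 (translate s2 (proj1_sig x)))
  (Hy1 : ~ in_C Gam gam n1 (translate s1 (proj1_sig y)))
  (Hy2 : in_C Gam gam m2 (translate s2 (proj1_sig y))) :
  m2 <= n1.
Proof.
  destruct (le_lt_dec m2 n1) as [|Hm]; [assumption|exfalso].
  assert (Gmono : forall k n g, 1 <= n -> Gam (n + k) g -> Gam n g).
  { induction k; intros n g Hn Hg. rewrite Nat.add_0_r in Hg; exact Hg.
    apply IHk; auto. rewrite Nat.add_succ_r in Hg. apply (proj1 (Hdec (n+k) ltac:(lia))); exact Hg. }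
  assert (Cmono : forall (c : inv_limit Gam) k n g, 1 <= n -> proj1_sig c (n + k) g -> proj1_sig c n g).
  { intros c. induction k; intros n g Hn Hg. rewrite Nat.add_0_r in Hg; exact Hg.
    apply IHk; auto. rewrite Nat.add_succ_r in Hg. apply (proj2 (proj2_sig c (n+k) ltac:(lia))); exact Hg. }
  assert (Key : forall (c : inv_limit Gam) m p, n1 < m -> proj1_sig c m p ->
            proj1_sig c n1 = lcoset (Gam n1) p).
  { intros c m p Hnm Hp.
    assert (Hp1 : proj1_sig c n1 p).
    { apply (Cmono c (m - n1)); [lia|]. replace (n1 + (m - n1)) with m by lia. exact Hp. }
    destruct (proj1 (proj2_sig c n1 ltac:(lia))) as [g' Hg'].
    rewrite Hg' in Hp1 |- *. apply coset_eq; auto. apply Hsub; lia. }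
  assert (Px : proj1_sig x n2 (gmul (ginv s2) (gam n2))).
  { change (translate s2 (proj1_sig x) n2 (gam n2)). rewrite Hx2. unfold lcoset.
    rewrite gmulVl. apply Hsub; lia. }
  assert (Py : proj1_sig y m2 (gmul (ginv s2) (gam m2))).
  { change (translate s2 (proj1_sig y) m2 (gam m2)). rewrite Hy2. unfold lcoset.
    rewrite gmulVl. apply Hsub; lia. }
  pose proof (Key x n2 _ Hlt Px) as Ex.
  pose proof (Key y m2 _ Hm Py) as Ey.
  assert (Exy : proj1_sig x n1 = proj1_sig y n1).
  { rewrite Ex, Ey. apply coset_eq; [apply Hsub; lia|].
    rewrite ginvM, <- gmulA, (gmulA _ s2), gmulVr, gmul1l.
    destruct (Hsub n1 ltac:(lia)) as [_ [HM HI]].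
    assert (A : Gam n1 (gam n2)).
    { apply (Gmono (n2 - 1 - n1)); [lia|]. replace (n1 + (n2 - 1 - n1)) with (n2 - 1) by lia.
      apply Hgam; lia. }
    assert (B : Gam n1 (gam m2)).
    { apply (Gmono (m2 - 1 - n1)); [lia|]. replace (n1 + (m2 - 1 - n1)) with (m2 - 1) by lia.
      apply Hgam; lia. }
    apply HM; auto. }
  apply Hy1. unfold in_C, translate in *. rewrite <- Exy. exact Hx1.
Qed.
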